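(* Let $\mathcal{M}$ be an episodic MDP with rewards in $[0,1]$ and deterministic expert $\pi^{\operatorname{E}}$. Let $\widehat P$ be a (random) transition model, $\widetilde d=(\widetilde d_h)_{h\le H}$ with $\widetilde d_h:\mathcal{S}\times\mathcal{A}\to\mathbb{R}$ a (random) estimator, and $\bar\pi$ a policy. Suppose: (a) with probability at least $1-\delta_{\operatorname{RFE}}$, for every reward function $w=(w_h)$ with $w_h:\mathcal{S}\times\mathcal{A}\to[-1,1]$ and every policy $\pi$, $|V^{\pi,P,w}-V^{\pi,\widehat P,w}|\le\varepsilon_{\operatorname{RFE}}$; (b) with probability at least $1-\delta_{\operatorname{EST}}$, $\sum_{h=1}^H\|\widetilde d_h-d_h^{\pi^{\operatorname{E}}}\|_1\le\varepsilon_{\operatorname{EST}}$; (c) $\sum_{h=1}^H\|\widetilde d_h-d_h^{\bar\pi,\widehat P}\|_1\le\min_{\pi\in\Pi}\sum_{h=1}^H\|\widetilde d_h-d_h^{\pi,\widehat P}\|_1+\varepsilon_{\mathrm{opt}}$. Then with probability at least $1-\delta_{\operatorname{EST}}-\delta_{\operatorname{RFE}}$, $V^{\pi^{\operatorname{E}}}-V^{\bar\pi}\le2\varepsilon_{\operatorname{EST}}+2\varepsilon_{\operatorname{RFE}}+\varepsilon_{\mathrm{opt}}$.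
   Context: Episodic MDP $(\mathcal{S},\mathcal{A},P,r,H,\rho)$, $\mathcal{S},\mathcal{A}$ finite, $r_h:\mathcal{S}\times\mathcal{A}\to[0,1]$, transitions $P_h(\cdot|s,a)$, initial distribution $\rho$. Policies $\pi=(\pi_h)$, $\pi_h:\mathcal{S}\to\Delta(\mathcal{A})$; $\Pi$ all policies. For a transition model $Q=(Q_h)$, $d_h^{\pi,Q}(s,a)$ is the probability of $(s_h,a_h)=(s,a)$ when running $\pi$ from $s_1\sim\rho$ with $s_{h+1}\sim Q_h(\cdot|s_h,a_h)$; $d_h^\pi=d_h^{\pi,P}$. $V^{\pi,Q,w}=\sum_h\sum_{(s,a)}d_h^{\pi,Q}(s,a)w_h(s,a)$ and $V^\pi=V^{\pi,P,r}$. $\|\cdot\|_1$ is the $\ell_1$ norm over $\mathcal{S}\times\mathcal{A}$. *)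

(* Defs.v *)
From HB Require Import structures.
From mathcomp Require Import all_boot all_order all_algebra.
From mathcomp Require Import all_classical all_reals.
From mathcomp Require Import ereal measure probability.
Set Implicit Arguments. Unset Strict Implicit. Unset Printing Implicit Defensive.
Import Order.TTheory GRing.Theory Num.Theory.
Local Open Scope ring_scope.

Section MDP.
Variables (R : realType) (S A : finType).

Definition is_dist (T : finType) (p : T -> R) : Prop :=
  (forall x, 0 <= p x) /\ \sum_(x : T) p x = 1.

(* transition model Q_h(. | s, a) (steps indexed by nat, step h = 0..H-1) *)
Definition is_transition (Q : nat -> S -> A -> S -> R) : Prop :=
  forall h s a, is_dist (Q h s a).

Definition is_policy (pi : nat -> S -> A -> R) : Prop :=
  forall h s, is_dist (pi h s).

Definition det_policy (piE : nat -> S -> A) : nat -> S -> A -> R :=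
  fun h s a => if a == piE h s then 1 else 0.

Fixpoint state_dist (rho : S -> R) (Q : nat -> S -> A -> S -> R)
    (pi : nat -> S -> A -> R) (h : nat) : S -> R :=
  match h with
  | 0 => rho
  | h'.+1 => fun s' => \sum_(s : S) \sum_(a : A)
                state_dist rho Q pi h' s * pi h' s a * Q h' s a s'
  end.

Definition occ (rho : S -> R) (Q : nat -> S -> A -> S -> R)
    (pi : nat -> S -> A -> R) (h : nat) (s : S) (a : A) : R :=
  state_dist rho Q pi h s * pi h s a.

Definition value (H : nat) (rho : S -> R) (Q : nat -> S -> A -> S -> R)
    (pi : nat -> S -> A -> R) (w : nat -> S -> A -> R) : R :=
  \sum_(h < H) \sum_(s : S) \sum_(a : A) occ rho Q pi h s a * w h s a.

Definition l1 (f : S -> A -> R) : R := \sum_(s : S) \sum_(a : A) `|f s a|.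

Definition occ_dist (H : nat) (dt : nat -> S -> A -> R) (rho : S -> R)
    (Q : nat -> S -> A -> S -> R) (pi : nat -> S -> A -> R) : R :=
  \sum_(h < H) l1 (fun s a => dt h s a - occ rho Q pi h s a).

End MDP.
Arguments det_policy {R S A} piE h s a.

(* Main.v *)
Require Import Defs.
From HB Require Import structures.
From mathcomp Require Import all_boot all_order all_algebra.
From mathcomp Require Import all_classical all_reals.
From mathcomp Require Import ereal measure probability.
From mathcomp Require Import ring lra.
Import Order.TTheory GRing.Theory Num.Theory.
Local Open Scope ring_scope.
Local Open Scope classical_set_scope.

Section Aux.
Variables (R : realType) (S A : finType).

Definition sum3 (H : nat) (f : nat -> S -> A -> R) : R :=
  \sum_(h < H) \sum_(s : S) \sum_(a : A) f h s a.

Lemma sum3_eq H f g : (forall h s a, f h s a = g h s a) -> sum3 H f = sum3 H g.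
Proof.
move=> e; apply: eq_bigr => h _; apply: eq_bigr => s _; apply: eq_bigr => a _; exact: e.
Qed.

Lemma sum3D H f g : sum3 H (fun h s a => f h s a + g h s a) = sum3 H f + sum3 H g.
Proof.
rewrite /sum3 -big_split; apply: eq_bigr => h _ /=; rewrite -big_split;
apply: eq_bigr => s _ /=; by rewrite -big_split.
Qed.

Lemma sum3B H f g : sum3 H (fun h s a => f h s a - g h s a) = sum3 H f - sum3 H g.
Proof.
rewrite /sum3 -sumrB; apply: eq_bigr => h _ /=; rewrite -sumrB;
apply: eq_bigr => s _ /=; by rewrite -sumrB.
Qed.

Lemma l1_bound (x w : S -> A -> R) : (forall s a, -1 <= w s a <= 1) ->
  \sum_(s : S) \sum_(a : A) x s a * w s a <= l1 x.
Proof.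
move=> hw; apply: ler_sum => s _; apply: ler_sum => a _.
apply: le_trans (ler_norm _) _; rewrite normrM.
have : `|w s a| <= 1 by rewrite ler_norml; case/andP: (hw s a) => -> ->.
move=> h1; rewrite -[X in _ <= X]mulr1; apply: ler_wpM2l => //.
Qed.

Lemma l1_sym (f g : S -> A -> R) :
  l1 (fun s a => f s a - g s a) = l1 (fun s a => g s a - f s a).
Proof. apply: eq_bigr => s _; apply: eq_bigr => a _; exact: distrC. Qed.

Lemma l1_tri (f g k : S -> A -> R) :
  l1 (fun s a => f s a - k s a) <= l1 (fun s a => f s a - g s a) + l1 (fun s a => g s a - k s a).
Proof.
rewrite /l1 -big_split; apply: ler_sum => s _; rewrite -big_split; apply: ler_sum => a _ /=.
have -> : f s a - k s a = (f s a - g s a) + (g s a - k s a) by rewrite addrA subrK.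
exact: ler_normD.
Qed.

Lemma det_pol (piE : nat -> S -> A) : is_policy (@det_policy R S A piE).
Proof.
move=> h s; split=> [a|]; first by rewrite /det_policy; case: eqP.
rewrite (bigD1 (piE h s)) //= /det_policy eqxx big1 ?addr0 // => a /negbTE -> //.
Qed.

Lemma valueE H rho Q pi w : value H rho Q pi w =
  sum3 H (fun h s a => occ rho Q pi h s a * w h s a).
Proof. by []. Qed.
End Aux.
Arguments sum3 {R S A}.
Arguments sum3_eq {R S A}.
Arguments det_pol {R S A}.
Lemma prob_inter (R : realType) (d : measure_display) (T : measurableType d) (Pr : probability T R)
  (E1 E2 : set T) (x y : R) : measurable E1 -> measurable E2 ->
  ((1 - x)%:E <= Pr E1)%E -> ((1 - y)%:E <= Pr E2)%E ->
  ((1 - x - y)%:E <= Pr (E1 `&` E2))%E.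
Proof.
move=> m1 m2 h1 h2.
have mC1 : measurable (~` E1) by exact: measurableC.
have mC2 : measurable (~` E2) by exact: measurableC.
have mI : measurable (E1 `&` E2) by exact: measurableI.
have hU : (Pr (~` E1 `|` ~` E2) <= Pr (~` E1) + Pr (~` E2))%E by exact: measureU2.
have e : ~` E1 `|` ~` E2 = ~` (E1 `&` E2) by rewrite setCI.
rewrite e !probability_setC // in hU.
move: h1 h2 hU.
rewrite -[Pr E1]fineK ?fin_num_measure // -[Pr E2]fineK ?fin_num_measure //
  -[Pr (E1 `&` E2)]fineK ?fin_num_measure //.
rewrite !lee_fin.
move=> *; lra.
Qed.
Theorem proposition1 (R : realType) (S A : finType) (H : nat)
  (rho : S -> R) (P : nat -> S -> A -> S -> R) (r : nat -> S -> A -> R)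
  (piE : nat -> S -> A)
  (d : measure_display) (T : measurableType d) (Pr : probability T R)
  (Phat : T -> nat -> S -> A -> S -> R) (dt : T -> nat -> S -> A -> R)
  (pibar : T -> nat -> S -> A -> R)
  (eps_RFE delta_RFE eps_EST delta_EST eps_opt : R) :
  is_dist rho ->
  is_transition P ->
  (forall h s a, 0 <= r h s a <= 1) ->
  (forall om, is_transition (Phat om)) ->
  (forall om, is_policy (pibar om)) ->
  (* (a) *)
  (exists E : set T, [/\ measurable E, ((1 - delta_RFE)%:E <= Pr E)%E &
     forall om, E om ->
       forall w : nat -> S -> A -> R, (forall h s a, -1 <= w h s a <= 1) ->
       forall pi, is_policy pi ->
         `|value H rho P pi w - value H rho (Phat om) pi w| <= eps_RFE]) ->
  (* (b) *)
  (exists E : set T, [/\ measurable E, ((1 - delta_EST)%:E <= Pr E)%E &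
     forall om, E om ->
       occ_dist H (dt om) rho P (det_policy piE) <= eps_EST]) ->
  (* (c) *)
  (forall om pi, is_policy pi ->
     occ_dist H (dt om) rho (Phat om) (pibar om)
       <= occ_dist H (dt om) rho (Phat om) pi + eps_opt) ->
  exists E : set T, [/\ measurable E,
     ((1 - delta_EST - delta_RFE)%:E <= Pr E)%E &
     forall om, E om ->
       value H rho P (det_policy piE) r - value H rho P (pibar om) r
         <= 2 * eps_EST + 2 * eps_RFE + eps_opt].
Proof.
move=> _ _ hr hPhat hpib [Ea [mEa pEa hA]] [Eb [mEb pEb hB]] hC.
exists (Eb `&` Ea); split; first exact: measurableI.
  exact: prob_inter.
move=> om [/hB hb /hA ha].
set dE := occ rho P (det_policy piE).
set dEh := occ rho (Phat om) (det_policy piE).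
set dbh := occ rho (Phat om) (pibar om).
set dbP := occ rho P (pibar om).
have hr1 : forall h s a, -1 <= r h s a <= 1.
  by move=> h s a; case/andP: (hr h s a) => h1 h2; rewrite h2 andbT (le_trans _ h1) // lerN10.
have eq1 : value H rho P (det_policy piE) r - value H rho P (pibar om) r =
  sum3 H (fun h s a => (dE h s a - dt om h s a) * r h s a)
  + sum3 H (fun h s a => (dt om h s a - dbh h s a) * r h s a)
  + (value H rho (Phat om) (pibar om) r - value H rho P (pibar om) r).
  rewrite !valueE -!sum3B -!sum3D; apply: sum3_eq => h s a.
  rewrite /dE /dbh /dbP; ring.
have B1 : sum3 H (fun h s a => (dE h s a - dt om h s a) * r h s a)
    <= occ_dist H (dt om) rho P (det_policy piE).
  apply: ler_sum => h _; rewrite l1_sym; exact: l1_bound.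
have B2 : sum3 H (fun h s a => (dt om h s a - dbh h s a) * r h s a)
    <= occ_dist H (dt om) rho (Phat om) (pibar om).
  apply: ler_sum => h _; exact: l1_bound.
have B3 : value H rho (Phat om) (pibar om) r - value H rho P (pibar om) r <= eps_RFE.
  apply: le_trans (ler_norm _) _; rewrite distrC; exact: ha.
have B4 := hC om _ (det_pol piE).
set w := fun h s a => Num.sg (dE h s a - dEh h s a).
have hw : forall h s a, -1 <= w h s a <= 1.
  by move=> h s a; rewrite -ler_norml normr_sg; case: (_ != 0).
have B6 : \sum_(h < H) l1 (fun s a => dE h s a - dEh h s a) <= eps_RFE.
  have := ha w hw _ (det_pol piE).
  have -> : value H rho P (det_policy piE) w - value H rho (Phat om) (det_policy piE) w
     = \sum_(h < H) l1 (fun s a => dE h s a - dEh h s a).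
    rewrite !valueE -sum3B /sum3; apply: eq_bigr => h _; apply: eq_bigr => s _; apply: eq_bigr => a _.
    by rewrite /w normrEsg -/dE -/dEh mulrC mulrBr mulrC [X in _ - X]mulrC.
  by move/(le_trans (ler_norm _)).
have B5 : occ_dist H (dt om) rho (Phat om) (det_policy piE)
   <= occ_dist H (dt om) rho P (det_policy piE) + \sum_(h < H) l1 (fun s a => dE h s a - dEh h s a).
  rewrite /occ_dist -big_split; apply: ler_sum => h _ /=; exact: l1_tri.
rewrite eq1; lra.
Qed.
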